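(* The left ideals $I_H,I_V,I_D$ of $\mathbb Z[\Gamma^2]$ are finitely generated, namely $I_H=\langle (1+S,1),\,(1+U+U^2,1),\,(1,1-T)\rangle$, $I_V=\langle (1,1+S),\,(1,1+U+U^2),\,(1-US,1)\rangle$, and $I_D=\langle (1,1)+(S,S),\,(1,1)+(U,U)+(U^2,U^2)\rangle$.
   Context: $\Gamma=PSL_2(\mathbb Z)$ acting on $\mathbb P^1(\mathbb Q)$; $S=\pm\begin{pmatrix}0&-1\\1&0\end{pmatrix}$, $U=\pm\begin{pmatrix}0&1\\-1&1\end{pmatrix}$, $T=\pm\begin{pmatrix}1&1\\0&1\end{pmatrix}$, so $US=\pm\begin{pmatrix}1&0\\1&1\end{pmatrix}$. Identify $\mathbb Z[\Gamma^2]=\mathbb Z[\Gamma]\otimes\mathbb Z[\Gamma]$, writing $(a,b)=a\otimes b$; $\langle\cdots\rangle$ means the left ideal generated. Let $\Gamma_\infty=\{T^n\}$, $\Gamma_0=\{(US)^n\}$, and for $\gamma\in\Gamma$ let $\partial\gamma=[\gamma\infty]-[\gamma0]\in\mathbb Z[\mathbb P^1(\mathbb Q)]$. For $\sum_i\lambda_i(\alpha_i,\beta_i)\in\mathbb Z[\Gamma^2]$ with distinct pairs: it lies in $I_H$ iff $\sum_{i:\beta_i\in C}\lambda_i\partial\alpha_i=0$ for every $C\in\Gamma/\Gamma_\infty$; in $I_V$ iff $\sum_{i:\alpha_i\in C}\lambda_i\partial\beta_i=0$ for every $C\in\Gamma/\Gamma_0$; in $I_D$ iff $\sum_{i:\beta_i\alpha_i^{-1}=g}\lambda_i\partial\alpha_i=0$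 for every $g\in\Gamma$. *)

(* Defs.v *)
From HB Require Import structures.
From mathcomp Require Import all_boot all_order all_algebra.
From Stdlib Require Import ClassicalEpsilon.
Set Implicit Arguments. Unset Strict Implicit. Unset Printing Implicit Defensive.
Import Order.TTheory GRing.Theory Num.Theory.
Local Open Scope ring_scope.

(* A 2x2 integer matrix (a,b,c,d) = [[a,b],[c,d]]. *)
Definition mat := (int * int * int * int)%type.
Definition mdet (m : mat) : int := let: (a, b, c, d) := m in a * d - b * c.
(* canonical representative of the class {m, -m}: (c > 0) or (c = 0 and d > 0) *)
Definition mnormb (m : mat) : bool :=
  let: (a, b, c, d) := m in (0 < c) || ((c == 0) && (0 < d)).
Definition mneg (m : mat) : mat := let: (a, b, c, d) := m in (- a, - b, - c, - d).
Definition mnormalize (m : mat) : mat := if mnormb m then m else mneg m.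
Definition mmul (m n : mat) : mat :=
  let: (a, b, c, d) := m in let: (a', b', c', d') := n in
  (a * a' + b * c', a * b' + b * d', c * a' + d * c', c * b' + d * d').
Definition madj (m : mat) : mat := let: (a, b, c, d) := m in (d, - b, - c, a).

Definition pslb (m : mat) : bool := (mdet m == 1) && mnormb m.
(* PSL_2(Z): elements are +-classes of determinant-1 integer matrices,
   represented by their unique normalized representative. *)
Definition PSL2Z := {m : mat | pslb m}.

Definition pone : PSL2Z := exist pslb (1, 0, 0, 1) isT.
Definition pmul (g h : PSL2Z) : PSL2Z := insubd pone (mnormalize (mmul (val g) (val h))).
Definition pinv (g : PSL2Z) : PSL2Z := insubd pone (mnormalize (madj (val g))).
Definition pmat (m : mat) : PSL2Z := insubd pone (mnormalize m).

Fixpoint pexpn (g : PSL2Z) (n : nat) : PSL2Z :=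
  match n with 0%N => pone | k.+1 => pmul g (pexpn g k) end.
Definition pexpz (g : PSL2Z) (n : int) : PSL2Z :=
  match n with Posz k => pexpn g k | Negz k => pexpn (pinv g) k.+1 end.

Definition Smat : PSL2Z := pmat (0, -1, 1, 0).
Definition Umat : PSL2Z := pmat (0, 1, -1, 1).
Definition Tmat : PSL2Z := pmat (1, 1, 0, 1).
Definition USmat : PSL2Z := pmul Umat Smat.   (* = +-[[1,0],[1,1]] *)

Definition propb (P : Prop) : bool :=
  if excluded_middle_informative P then true else false.
Definition inGinf (g : PSL2Z) : bool := propb (exists n : int, g = pexpz Tmat n).
Definition inG0 (g : PSL2Z) : bool := propb (exists n : int, g = pexpz USmat n).

Definition P1Q := option rat.   (* None = oo *)
(* gamma oo = a/c, gamma 0 = b/d (independent of the sign of the representative) *)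
Definition act_inf (g : PSL2Z) : P1Q :=
  let: (a, b, c, d) := val g in if c == 0 then None else Some (a%:Q / c%:Q).
Definition act_zero (g : PSL2Z) : P1Q :=
  let: (a, b, c, d) := val g in if d == 0 then None else Some (b%:Q / d%:Q).
(* coefficient of the point x in  partial g = [g oo] - [g 0]  in Z[P^1(Q)] *)
Definition bdry (g : PSL2Z) (x : P1Q) : int := (act_inf g == x)%:Z - (act_zero g == x)%:Z.

(* An element is a formal finite sum sum_i lambda_i (alpha_i, beta_i), given as a list;
   two lists represent the same element iff they have the same coefficients. *)
Definition G2 := (PSL2Z * PSL2Z)%type.
Definition ZG2 := seq (int * G2).
Definition coef (l : ZG2) (x : G2) : int := \sum_(e <- l | e.2 == x) e.1.
Definition zg_eq (l l' : ZG2) : Prop := forall x, coef l x = coef l' x.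
Definition zg_mul (r s : ZG2) : ZG2 :=
  [seq (e.1 * f.1, (pmul e.2.1 f.2.1, pmul e.2.2 f.2.2)) | e <- r, f <- s].
Definition zg_gen (a b : PSL2Z) : ZG2 := [:: (1, (a, b))].
Definition in_left_ideal (gs : seq ZG2) (l : ZG2) : Prop :=
  exists rs : seq ZG2, size rs = size gs /\
    zg_eq l (flatten [seq zg_mul p.1 p.2 | p <- zip rs gs]).

Definition in_IH (l : ZG2) : Prop :=
  forall (C : PSL2Z) (x : P1Q),   (* coset C Gamma_infty *)
    \sum_(e <- l | inGinf (pmul (pinv C) e.2.2)) e.1 * bdry e.2.1 x = 0.
Definition in_IV (l : ZG2) : Prop :=
  forall (C : PSL2Z) (x : P1Q),   (* coset C Gamma_0 *)
    \sum_(e <- l | inG0 (pmul (pinv C) e.2.1)) e.1 * bdry e.2.2 x = 0.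
Definition in_ID (l : ZG2) : Prop :=
  forall (g : PSL2Z) (x : P1Q),
    \sum_(e <- l | pmul e.2.2 (pinv e.2.1) == g) e.1 * bdry e.2.1 x = 0.

Definition U2 := pmul Umat Umat.
Definition genH : seq ZG2 :=
  [:: zg_gen pone pone ++ zg_gen Smat pone;
      zg_gen pone pone ++ zg_gen Umat pone ++ zg_gen U2 pone;
      [:: (1, (pone, pone)); (-1, (pone, Tmat))]].
Definition genV : seq ZG2 :=
  [:: zg_gen pone pone ++ zg_gen pone Smat;
      zg_gen pone pone ++ zg_gen pone Umat ++ zg_gen pone U2;
      [:: (1, (pone, pone)); (-1, (USmat, pone))]].
Definition genD : seq ZG2 :=
  [:: zg_gen pone pone ++ zg_gen Smat Smat;
      zg_gen pone pone ++ zg_gen Umat Umat ++ zg_gen U2 U2].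

(* Main.v *)
Require Import Defs.
From HB Require Import structures.
From mathcomp Require Import all_boot all_order all_algebra.
From mathcomp Require Import ring lra zify.
From Stdlib Require Import ClassicalEpsilon.
Set Implicit Arguments. Unset Strict Implicit. Unset Printing Implicit Defensive.
Import Order.TTheory GRing.Theory Num.Theory.
Local Open Scope ring_scope.

Lemma mdet_neg m : mdet (mneg m) = mdet m.
Proof. case: m => [[[a b] c] d] /=; ring. Qed.

Lemma mnormb_neg m : mdet m = 1 -> ~~ mnormb m -> mnormb (mneg m).
Proof. case: m => [[[a b] c] d] /= H /norP [N1 /nandP N2].
have [c0|cn0] := eqVneq c 0.
  subst c. case: N2 => // N2. have [d0|dn0] := eqVneq d 0.
    subst d. move: H. rewrite /=. nia.
  apply/orP; right. apply/andP; split. lia. lia.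
apply/orP; left. lia.
Qed.

Lemma mnormb_neg2 m : mnormb m -> ~~ mnormb (mneg m).
Proof. case: m => [[[a b] c] d] /= /orP [H|/andP [H1 H2]];
  apply/norP; split; try (apply/negP; lia); apply/nandP; lia.
Qed.

Lemma mnegK m : mneg (mneg m) = m.
Proof. case: m => [[[a b] c] d] /=; by rewrite !opprK. Qed.

Lemma mdet_mnormalize m : mdet (mnormalize m) = mdet m.
Proof. rewrite /mnormalize; case: ifP => // _; exact: mdet_neg. Qed.

Lemma mnormb_mnormalize m : mdet m = 1 -> mnormb (mnormalize m).
Proof. rewrite /mnormalize => H; case: ifPn => // N; exact: mnormb_neg. Qed.

Lemma pslb_mnormalize m : mdet m = 1 -> pslb (mnormalize m).
Proof. move=> H; rewrite /pslb mdet_mnormalize H eqxx /=; exact: mnormb_mnormalize. Qed.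

Lemma val_pmat m : mdet m = 1 -> val (pmat m) = mnormalize m.
Proof. move=> H; rewrite /pmat insubdK //; exact: pslb_mnormalize. Qed.

Lemma pmat_neg m : pmat (mneg m) = pmat m.
Proof.
rewrite /pmat /mnormalize; case: (boolP (mnormb m)) => N.
  by rewrite (negbTE (mnormb_neg2 N)) mnegK.
case: (boolP (mnormb (mneg m))) => N2 //.
rewrite mnegK /insubd !insubF //; apply/negbTE; rewrite /pslb negb_and ?N2 ?N orbT //.
Qed.

Lemma pmat_val g : pmat (val g) = g.
Proof.
rewrite /pmat /mnormalize; have := valP g; rewrite /pslb => /andP [_ ->]; exact: valKd.
Qed.

Lemma pmat_normalize m : pmat (mnormalize m) = pmat m.
Proof. rewrite /mnormalize; case: ifP => // _; exact: pmat_neg. Qed.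

Lemma mdet_mul m n : mdet (mmul m n) = mdet m * mdet n.
Proof. case: m => [[[a b] c] d]; case: n => [[[a' b'] c'] d'] /=; ring. Qed.

Lemma mmul_negl m n : mmul (mneg m) n = mneg (mmul m n).
Proof. case: m => [[[a b] c] d]; case: n => [[[a' b'] c'] d'] /=; congr (_,_,_,_); ring. Qed.
Lemma mmul_negr m n : mmul m (mneg n) = mneg (mmul m n).
Proof. case: m => [[[a b] c] d]; case: n => [[[a' b'] c'] d'] /=; congr (_,_,_,_); ring. Qed.
Lemma mmulA m n p : mmul m (mmul n p) = mmul (mmul m n) p.
Proof. case: m => [[[a b] c] d]; case: n => [[[a' b'] c'] d']; case: p => [[[a'' b''] c''] d''] /=; congr (_,_,_,_); ring. Qed.

Lemma pmat_mmul_norm m n :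
  pmat (mmul (mnormalize m) (mnormalize n)) = pmat (mmul m n).
Proof.
rewrite /mnormalize; case: ifP => _; case: ifP => _;
  by rewrite ?mmul_negl ?mmul_negr ?mnegK ?pmat_neg.
Qed.

Lemma pmulE m n : mdet m = 1 -> mdet n = 1 -> pmul (pmat m) (pmat n) = pmat (mmul m n).
Proof. move=> Hm Hn; rewrite /pmul (val_pmat Hm) (val_pmat Hn) -/(pmat _); exact: pmat_mmul_norm. Qed.

Lemma mdet_val (g : PSL2Z) : mdet (val g) = 1.
Proof. by have := valP g; rewrite /pslb => /andP [/eqP]. Qed.

Lemma pmul_val g h : pmul g h = pmat (mmul (val g) (val h)).
Proof. by []. Qed.

Lemma pmulA g h k : pmul g (pmul h k) = pmul (pmul g h) k.
Proof.
rewrite -(pmat_val g) -(pmat_val h) -(pmat_val k) !pmulE ?mdet_mul ?mdet_val ?mulr1 //.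
by rewrite mmulA.
Qed.

Lemma mdet1 : mdet (1,0,0,1) = 1. Proof. by []. Qed.

Lemma pone_pmat : pone = pmat (1,0,0,1).
Proof. by apply: val_inj; rewrite val_pmat. Qed.

Lemma mmul1m m : mmul (1,0,0,1) m = m.
Proof. case: m => [[[a b] c] d] /=; congr (_,_,_,_); ring. Qed.
Lemma mmulm1 m : mmul m (1,0,0,1) = m.
Proof. case: m => [[[a b] c] d] /=; congr (_,_,_,_); ring. Qed.

Lemma pmul1g g : pmul pone g = g.
Proof. by rewrite -(pmat_val g) pone_pmat pmulE ?mdet_val // mmul1m. Qed.
Lemma pmulg1 g : pmul g pone = g.
Proof. by rewrite -(pmat_val g) pone_pmat pmulE ?mdet_val // mmulm1. Qed.

Lemma mdet_adj m : mdet (madj m) = mdet m.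
Proof. case: m => [[[a b] c] d] /=; ring. Qed.

Lemma pinv_pmat m : mdet m = 1 -> pinv (pmat m) = pmat (madj m).
Proof.
move=> H; rewrite /pinv (val_pmat H) -/(pmat _).
rewrite /mnormalize; case: ifP => _ //.
have -> : madj (mneg m) = mneg (madj m) by case: m {H} => [[[a b] c] d] /=.
exact: pmat_neg.
Qed.

Lemma mmul_adjl m : mdet m = 1 -> mmul (madj m) m = (1,0,0,1).
Proof. case: m => [[[a b] c] d] /= H; congr (_,_,_,_); [rewrite -H; ring | ring | ring | rewrite -H; ring]. Qed.
Lemma mmul_adjr m : mdet m = 1 -> mmul m (madj m) = (1,0,0,1).
Proof. case: m => [[[a b] c] d] /= H; congr (_,_,_,_); [rewrite -H; ring | ring | ring | rewrite -H; ring]. Qed.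

Lemma pmulVg g : pmul (pinv g) g = pone.
Proof.
by rewrite -(pmat_val g) pinv_pmat ?mdet_val // pmulE ?mdet_adj ?mdet_val // mmul_adjl ?mdet_val // pone_pmat.
Qed.
Lemma pmulgV g : pmul g (pinv g) = pone.
Proof.
by rewrite -(pmat_val g) pinv_pmat ?mdet_val // pmulE ?mdet_adj ?mdet_val // mmul_adjr ?mdet_val // pone_pmat.
Qed.

Definition mc (m : mat) : int := let: (a, b, c, d) := m in c.
Definition md (m : mat) : int := let: (a, b, c, d) := m in d.
Definition ma (m : mat) : int := let: (a, b, c, d) := m in a.
Definition mb (m : mat) : int := let: (a, b, c, d) := m in b.

Definition ainf (m : mat) : P1Q :=
  let: (a, b, c, d) := m in if c == 0 then None else Some (a%:Q / c%:Q).
Definition azero (m : mat) : P1Q :=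
  let: (a, b, c, d) := m in if d == 0 then None else Some (b%:Q / d%:Q).

Lemma ainf_neg m : ainf (mneg m) = ainf m.
Proof. case: m => [[[a b] c] d] /=; rewrite oppr_eq0; case: ifP => // _.
by rewrite !rmorphN /= invrN mulrNN. Qed.
Lemma azero_neg m : azero (mneg m) = azero m.
Proof. case: m => [[[a b] c] d] /=; rewrite oppr_eq0; case: ifP => // _.
by rewrite !rmorphN /= invrN mulrNN. Qed.

Lemma act_inf_val g : act_inf g = ainf (val g).
Proof. by rewrite /act_inf; case: (val g) => [[[a b] c] d]. Qed.
Lemma act_zero_val g : act_zero g = azero (val g).
Proof. by rewrite /act_zero; case: (val g) => [[[a b] c] d]. Qed.

Lemma act_inf_pmat m : mdet m = 1 -> act_inf (pmat m) = ainf m.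
Proof. move=> H; rewrite act_inf_val val_pmat // /mnormalize; case: ifP => // _; exact: ainf_neg. Qed.
Lemma act_zero_pmat m : mdet m = 1 -> act_zero (pmat m) = azero m.
Proof. move=> H; rewrite act_zero_val val_pmat // /mnormalize; case: ifP => // _; exact: azero_neg. Qed.

Definition aone (m : mat) : P1Q :=
  let: (a, b, c, d) := m in if c + d == 0 then None else Some ((a + b)%:Q / (c + d)%:Q).
Definition act_one (g : PSL2Z) : P1Q := aone (val g).

Lemma ratNN (x z : int) : (- x)%:Q / (- z)%:Q = x%:Q / z%:Q.
Proof. by rewrite !rmorphN /= invrN mulrNN. Qed.

Lemma aone_neg m : aone (mneg m) = aone m.
Proof. case: m => [[[a b] c] d] /=; rewrite -opprD oppr_eq0; case: ifP => // _.
by rewrite -!opprD !rmorphN /= invrN mulrNN. Qed.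

Lemma act_one_pmat m : mdet m = 1 -> act_one (pmat m) = aone m.
Proof. move=> H; rewrite /act_one val_pmat // /mnormalize; case: ifP => // _; exact: aone_neg. Qed.

Lemma Smat_def : Smat = pmat (0,-1,1,0). Proof. by []. Qed.
Lemma Umat_def : Umat = pmat (0,1,-1,1). Proof. by []. Qed.
Lemma Tmat_def : Tmat = pmat (1,1,0,1). Proof. by []. Qed.
Lemma U2_def : U2 = pmat (-1,1,-1,0).
Proof. by rewrite /U2 Umat_def pmulE. Qed.
Lemma USmat_def : USmat = pmat (1,0,1,1).
Proof. by rewrite /USmat Umat_def Smat_def pmulE. Qed.

Lemma mmulS a b c d : mmul (a,b,c,d) (0,-1,1,0) = (b,-a,d,-c).
Proof. rewrite /=; congr (_,_,_,_); ring. Qed.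
Lemma mmulU a b c d : mmul (a,b,c,d) (0,1,-1,1) = (-b,a+b,-d,c+d).
Proof. rewrite /=; congr (_,_,_,_); ring. Qed.
Lemma mmulU2 a b c d : mmul (a,b,c,d) (-1,1,-1,0) = (-(a+b),a,-(c+d),c).
Proof. rewrite /=; congr (_,_,_,_); ring. Qed.
Lemma mmulT a b c d : mmul (a,b,c,d) (1,1,0,1) = (a,a+b,c,c+d).
Proof. rewrite /=; congr (_,_,_,_); ring. Qed.
Lemma mmulUS a b c d : mmul (a,b,c,d) (1,0,1,1) = (a+b,b,c+d,d).
Proof. rewrite /=; congr (_,_,_,_); ring. Qed.

Lemma pmat_valE (g : PSL2Z) : exists a b c d, val g = (a,b,c,d) /\ g = pmat (a,b,c,d) /\ a*d - b*c = 1.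
Proof.
move: (pmat_val g) (mdet_val g); case: (val g) => [[[a b] c] d] E D.
by exists a, b, c, d.
Qed.

Ltac psplit g a b c d E D :=
  let Hv := fresh "Hv" in
  have [a [b [c [d [Hv [E D]]]]]] := pmat_valE g; rewrite {Hv} E.

Lemma act_S g : act_inf (pmul g Smat) = act_zero g /\ act_zero (pmul g Smat) = act_inf g.
Proof.
psplit g a b c d E D.
rewrite Smat_def pmulE // mmulS ?act_inf_pmat ?act_zero_pmat /= ; try by rewrite -D; ring.
split=> //. by rewrite oppr_eq0; case: ifP => // _; rewrite !rmorphN /= invrN mulrNN.
Qed.

Lemma act_U g : act_inf (pmul g Umat) = act_zero g /\ act_zero (pmul g Umat) = act_one g.
Proof.
psplit g a b c d E D.
rewrite Umat_def pmulE // mmulU ?act_inf_pmat ?act_zero_pmat ?act_one_pmat /= ; try by rewrite -D; ring.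
split=> //. by rewrite oppr_eq0; case: ifP => // _; rewrite !rmorphN /= invrN mulrNN.
Qed.

Lemma act_U2 g : act_inf (pmul g U2) = act_one g /\ act_zero (pmul g U2) = act_inf g.
Proof.
psplit g a b c d E D.
rewrite U2_def pmulE // mmulU2 ?act_inf_pmat ?act_zero_pmat ?act_one_pmat /= ; try by rewrite -D; ring.
split=> //. by rewrite oppr_eq0; case: ifP => // _; rewrite !rmorphN /= invrN mulrNN.
Qed.

Lemma act_T g : act_inf (pmul g Tmat) = act_inf g.
Proof.
psplit g a b c d E D.
rewrite Tmat_def pmulE // mmulT ?act_inf_pmat ?act_zero_pmat ?act_one_pmat /= //; by rewrite -D; ring.
Qed.

Lemma act_US g : act_zero (pmul g USmat) = act_zero g.
Proof.
psplit g a b c d E D.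
rewrite USmat_def pmulE // mmulUS ?act_inf_pmat ?act_zero_pmat ?act_one_pmat /= //; by rewrite -D; ring.
Qed.

Lemma mul_eq1 (a d : int) : a * d = 1 -> (a = 1 /\ d = 1) \/ (a = -1 /\ d = -1).
Proof.
move=> H.
have : (`|a| * `|d| = 1)%N by rewrite -abszM H.
move/eqP; rewrite muln_eq1 => /andP [/eqP Ha /eqP Hd].
have [ea|ea] : a = 1 \/ a = -1 by lia.
all: have [ed|ed] : d = 1 \/ d = -1 by lia.
all: subst.
- by left.
- by move: H; rewrite mulrN1; lia.
- by move: H; rewrite mulr1; lia.
- by right.
Qed.

Lemma propbE (P : Prop) : propb P = true <-> P.
Proof. rewrite /propb; case: excluded_middle_informative => //. Qed.

Lemma pexpnT k : pexpn Tmat k = pmat (1, k%:Z, 0, 1).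
Proof.
elim: k => [|k IH] /=; first exact: pone_pmat.
rewrite IH Tmat_def pmulE; [f_equal; rewrite /= intS; congr (_,_,_,_); ring | by [] | rewrite /=; ring].
Qed.

Lemma pinvT : pinv Tmat = pmat (1,-1,0,1).
Proof. by rewrite Tmat_def pinv_pmat. Qed.

Lemma pexpnTi k : pexpn (pinv Tmat) k = pmat (1, - k%:Z, 0, 1).
Proof.
elim: k => [|k IH] /=; first exact: pone_pmat.
rewrite IH pinvT pmulE; [f_equal; rewrite /= intS; congr (_,_,_,_); ring | by [] | rewrite /=; ring].
Qed.

Lemma pexpzT n : pexpz Tmat n = pmat (1, n, 0, 1).
Proof. case: n => k; first exact: pexpnT. by rewrite /pexpz pexpnTi NegzE. Qed.

Lemma pexpnUS k : pexpn USmat k = pmat (1, 0, k%:Z, 1).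
Proof.
elim: k => [|k IH] /=; first exact: pone_pmat.
rewrite IH USmat_def pmulE; [f_equal; rewrite /= intS; congr (_,_,_,_); ring | by [] | rewrite /=; ring].
Qed.

Lemma pinvUS : pinv USmat = pmat (1,0,-1,1).
Proof. by rewrite USmat_def pinv_pmat. Qed.

Lemma pexpnUSi k : pexpn (pinv USmat) k = pmat (1, 0, - k%:Z, 1).
Proof.
elim: k => [|k IH] /=; first exact: pone_pmat.
rewrite IH pinvUS pmulE; [f_equal; rewrite /= intS; congr (_,_,_,_); ring | by [] | rewrite /=; ring].
Qed.

Lemma pexpzUS n : pexpz USmat n = pmat (1, 0, n, 1).
Proof. case: n => k; first exact: pexpnUS. by rewrite /pexpz pexpnUSi NegzE. Qed.

Lemma val_pmat_norm m : mdet m = 1 -> mnormb m -> val (pmat m) = m.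
Proof. by move=> H N; rewrite val_pmat // /mnormalize N. Qed.

Lemma inGinfE g : inGinf g = (mc (val g) == 0).
Proof.
apply/idP/idP.
  move/propbE => [n ->]; rewrite pexpzT val_pmat_norm //; rewrite /=; ring.
psplit g a b c d E D.
rewrite val_pmat //= /mnormalize.
have Hn := mnormb_mnormalize (m:=(a,b,c,d)) D.
rewrite /mnormalize in Hn.
case: ifP Hn => /= N _ /eqP c0.
  subst c. move: N => /orP [|/andP [_ d0]]; first by rewrite ltxx.
  have : a * d = 1 by rewrite -D; ring.
  case/mul_eq1 => [[a1 d1]|[a1 d1]]; subst a d; last by [].
  apply/propbE; exists b; by rewrite pexpzT.
have c00 : c = 0 by lia. subst c.
move: N => /norP [_ /nandP [//|d0]]. rewrite -leNgt in d0.
have : a * d = 1 by rewrite -D; ring.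
case/mul_eq1 => [[a1 d1]|[a1 d1]]; subst a d; first by [].
apply/propbE; exists (-b); rewrite pexpzT -pmat_neg /=; f_equal; congr (_,_,_,_); ring.
Qed.

Lemma inG0E g : inG0 g = (mb (val g) == 0).
Proof.
apply/idP/idP.
  move/propbE => [n ->]; rewrite pexpzUS val_pmat; last by rewrite /=; ring.
  rewrite /mnormalize; case: ifP => _ //=; by rewrite oppr0.
psplit g a b c d E D.
rewrite val_pmat //= /mnormalize.
case: ifP => /= N /eqP b0.
  subst b.
  have [[a1 d1]|[a1 d1]] : (a = 1 /\ d = 1) \/ (a = -1 /\ d = -1) by apply: mul_eq1; rewrite -D; ring.
    subst; apply/propbE; exists c; by rewrite pexpzUS.
  subst; apply/propbE; exists (-c); rewrite pexpzUS -pmat_neg /=; f_equal; congr (_,_,_,_); ring.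
have b00 : b = 0 by lia. subst b.
have [[a1 d1]|[a1 d1]] : (a = 1 /\ d = 1) \/ (a = -1 /\ d = -1) by apply: mul_eq1; rewrite -D; ring.
  subst; apply/propbE; exists c; by rewrite pexpzUS.
subst; apply/propbE; exists (-c); rewrite pexpzUS -pmat_neg /=; f_equal; congr (_,_,_,_); ring.
Qed.

Lemma mc_norm m : (mc (mnormalize m) == 0) = (mc m == 0).
Proof. rewrite /mnormalize; case: ifP => // _; case: m => [[[a b] c] d] /=; by rewrite oppr_eq0. Qed.
Lemma mb_norm m : (mb (mnormalize m) == 0) = (mb m == 0).
Proof. rewrite /mnormalize; case: ifP => // _; case: m => [[[a b] c] d] /=; by rewrite oppr_eq0. Qed.

Lemma ratEq (a c a' c' : int) : c != 0 -> c' != 0 ->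
  (Some (a'%:Q / c'%:Q) == Some (a%:Q / c%:Q)) = (a' * c == a * c').
Proof.
move=> c0 c'0; rewrite (inj_eq (@Some_inj _)) eqr_div ?intr_eq0 //.
by rewrite -!rmorphM /= eqr_int.
Qed.

Lemma ainf_eq a b c d a' b' c' d' : a*d - b*c = 1 -> a'*d' - b'*c' = 1 ->
  (-c * a' + a * c' == 0) = (ainf (a',b',c',d') == ainf (a,b,c,d)).
Proof.
move=> D D' /=.
have [c0|c0] := eqVneq c 0; have [c'0|c'0] := eqVneq c' 0.
- subst; apply/eqP; ring.
- subst; apply/negbTE; apply/eqP => H.
  have a0 : a = 0. apply/eqP; move: H => /eqP; rewrite oppr0 mul0r add0r mulf_eq0 (negbTE c'0) orbF //.
  by move: D; rewrite a0 mul0r; lia.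
- subst; apply/negbTE; apply/eqP => H.
  have a0 : a' = 0. apply/eqP; move: H => /eqP; rewrite mulr0 addr0 mulNr oppr_eq0 mulf_eq0 (negbTE c0) //.
  by move: D'; rewrite a0 mul0r; lia.
- rewrite ratEq //; apply/eqP/eqP => H; lia.
Qed.

Lemma azero_eq a b c d a' b' c' d' : a*d - b*c = 1 -> a'*d' - b'*c' = 1 ->
  (d * b' + (- b) * d' == 0) = (azero (a',b',c',d') == azero (a,b,c,d)).
Proof.
move=> D D' /=.
have [c0|c0] := eqVneq d 0; have [c'0|c'0] := eqVneq d' 0.
- subst; apply/eqP; ring.
- subst; apply/negbTE; apply/eqP => H.
  have a0 : b = 0. apply/eqP; move: H => /eqP; rewrite mul0r add0r mulNr oppr_eq0 mulf_eq0 (negbTE c'0) orbF //.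
  by move: D; rewrite a0 mul0r mulr0; lia.
- subst; apply/negbTE; apply/eqP => H.
  have a0 : b' = 0. apply/eqP; move: H => /eqP; rewrite mulr0 addr0 mulf_eq0 (negbTE c0) //.
  by move: D'; rewrite a0 mul0r mulr0; lia.
- rewrite ratEq //; apply/eqP/eqP => H; lia.
Qed.

Lemma inGinf_coset C g : inGinf (pmul (pinv C) g) = (act_inf g == act_inf C).
Proof.
psplit C a b c d E D. psplit g a' b' c' d' E' D'.
have DA : mdet (madj (a,b,c,d)) = 1 by rewrite mdet_adj.
rewrite pinv_pmat // (pmulE DA (D' : mdet (_,_,_,_) = 1)).
rewrite inGinfE val_pmat; last by rewrite mdet_mul DA mul1r.
rewrite mc_norm !act_inf_pmat //= -(ainf_eq D D'); apply/eqP/eqP => H; lia.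
Qed.

Lemma inG0_coset C g : inG0 (pmul (pinv C) g) = (act_zero g == act_zero C).
Proof.
psplit C a b c d E D. psplit g a' b' c' d' E' D'.
have DA : mdet (madj (a,b,c,d)) = 1 by rewrite mdet_adj.
rewrite pinv_pmat // (pmulE DA (D' : mdet (_,_,_,_) = 1)).
rewrite inG0E val_pmat; last by rewrite mdet_mul DA mul1r.
rewrite mb_norm !act_zero_pmat //= -(azero_eq D D'); apply/eqP/eqP => H; lia.
Qed.

Lemma pinvM g h : pinv (pmul g h) = pmul (pinv h) (pinv g).
Proof.
have H : pmul (pmul g h) (pmul (pinv h) (pinv g)) = pone.
  by rewrite pmulA -(pmulA g) pmulgV pmulg1 pmulgV.
by rewrite -[LHS]pmulg1 -H pmulA pmulVg pmul1g.
Qed.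

Lemma pmul_coset a b k : pmul (pmul b k) (pinv (pmul a k)) = pmul b (pinv a).
Proof. by rewrite pinvM pmulA -(pmulA b) pmulgV pmulg1. Qed.

Definition zscale (k : int) (l : ZG2) : ZG2 := [seq (k * e.1, e.2) | e <- l].
Notation zneg := (zscale (-1)).

Lemma coef_nil x : coef [::] x = 0.
Proof. by rewrite /coef big_nil. Qed.
Lemma coef_cons e l x : coef (e :: l) x = (if e.2 == x then e.1 else 0) + coef l x.
Proof. rewrite /coef big_cons; case: ifP => _ //; by rewrite add0r. Qed.
Lemma coef_cat a b x : coef (a ++ b) x = coef a x + coef b x.
Proof. by rewrite /coef big_cat. Qed.
Lemma coef_scale k a x : coef (zscale k a) x = k * coef a x.
Proof.
elim: a => [|e a IH]; first by rewrite /= !coef_nil mulr0.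
rewrite /= !coef_cons IH /=; case: ifP => _; ring.
Qed.
Lemma coef_flatten L x : coef (flatten L) x = \sum_(l <- L) coef l x.
Proof. elim: L => [|l L IH]; first by rewrite big_nil coef_nil. by rewrite /= coef_cat IH big_cons. Qed.

Ltac zgeq := let x := fresh "x" in move=> x; rewrite ?(coef_cat, coef_scale, coef_nil, coef_cons, coef_flatten) /=; ring.

Lemma zg_eq_refl a : zg_eq a a. Proof. by []. Qed.
Lemma zg_eq_sym a b : zg_eq a b -> zg_eq b a. Proof. by move=> H x. Qed.
Lemma zg_eq_trans a b c : zg_eq a b -> zg_eq b c -> zg_eq a c.
Proof. by move=> H1 H2 x; rewrite H1 H2. Qed.

Lemma sum_coef (h : G2 -> int) (l : ZG2) (U : seq G2) : uniq U -> {subset [seq e.2 | e <- l] <= U} ->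
  \sum_(e <- l) e.1 * h e.2 = \sum_(x <- U) coef l x * h x.
Proof.
move=> uU; elim: l => [|e l IH] sub.
  by rewrite big_nil big1_seq // => x _; rewrite coef_nil mul0r.
rewrite big_cons IH; last by move=> y yl; apply: sub; rewrite /= inE yl orbT.
have eU : e.2 \in U by apply: sub; rewrite /= inE eqxx.
rewrite (bigD1_seq e.2) //= (bigD1_seq e.2 eU uU) /= coef_cons eqxx addrA mulrDl; congr (_ + _).
apply: eq_bigr => x /negbTE nx; rewrite coef_cons eq_sym nx add0r //.
Qed.

Lemma sum_zg_eq (h : G2 -> int) l l' : zg_eq l l' ->
  \sum_(e <- l) e.1 * h e.2 = \sum_(e <- l') e.1 * h e.2.
Proof.
move=> E; set U := undup ([seq e.2 | e <- l] ++ [seq e.2 | e <- l']).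
rewrite (@sum_coef h l U) ?undup_uniq //; last by move=> y yl; rewrite mem_undup mem_cat yl.
rewrite (@sum_coef h l' U) ?undup_uniq //; last by move=> y yl; rewrite mem_undup mem_cat yl orbT.
by apply: eq_bigr => x _; rewrite E.
Qed.

Lemma zg_mul_nil g : zg_mul [::] g = [::]. Proof. by []. Qed.
Lemma zg_mul_cat r1 r2 g : zg_mul (r1 ++ r2) g = zg_mul r1 g ++ zg_mul r2 g.
Proof. by rewrite /zg_mul allpairs_cat. Qed.
Lemma zg_mul_scale k r g : zg_mul (zscale k r) g = zscale k (zg_mul r g).
Proof.
elim: r => [|e r IH] //=. rewrite /zg_mul /= -/(zg_mul r g) -/(zg_mul (zscale k r) g) IH.
rewrite /zscale map_cat -map_comp; congr (_ ++ _); apply: eq_map => f /=; by rewrite mulrA.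
Qed.

Definition icomb (rs gs : seq ZG2) : ZG2 := flatten [seq zg_mul p.1 p.2 | p <- zip rs gs].

Section Ideal.
Variable gs : seq ZG2.
Local Notation R := (in_left_ideal gs).

Lemma ideal0 : R [::].
Proof.
exists (nseq (size gs) [::]); split; first by rewrite size_nseq.
change (zg_eq [::] (icomb (nseq (size gs) [::]) gs)).
have -> : icomb (nseq (size gs) [::]) gs = [::] by elim: gs => //= g gs' IH.
by [].
Qed.

Lemma icomb_cat rs1 rs2 : size rs1 = size gs -> size rs2 = size gs ->
  zg_eq (icomb [seq p.1 ++ p.2 | p <- zip rs1 rs2] gs) (icomb rs1 gs ++ icomb rs2 gs).
Proof.
rewrite /icomb; elim: gs rs1 rs2 => [|g gs' IH] [|r1 rs1] [|r2 rs2] //= [s1] [s2].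
move: (IH rs1 rs2 s1 s2) => H x.
rewrite coef_cat zg_mul_cat coef_cat (H x) !coef_cat; ring.
Qed.

Lemma idealD a b : R a -> R b -> R (a ++ b).
Proof.
move=> [rs1 [s1 E1]] [rs2 [s2 E2]].
exists [seq p.1 ++ p.2 | p <- zip rs1 rs2]; split; first by rewrite size_map size_zip s1 s2 minnn.
apply: zg_eq_sym; apply: zg_eq_trans (icomb_cat s1 s2) _.
by move=> x; rewrite !coef_cat E1 E2.
Qed.

Lemma icomb_scale k rs : zg_eq (icomb [seq zscale k r | r <- rs] gs) (zscale k (icomb rs gs)).
Proof.
rewrite /icomb; elim: gs rs => [|g gs' IH] [|r rs] //= x.
rewrite coef_cat zg_mul_scale (IH rs x) coef_scale [X in _ + X]coef_scale coef_scale coef_cat; ring.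
Qed.

Lemma idealZ k a : R a -> R (zscale k a).
Proof.
move=> [rs [s E]]; exists [seq zscale k r | r <- rs]; split; first by rewrite size_map.
apply: zg_eq_sym; apply: zg_eq_trans (icomb_scale k rs) _.
by move=> x; rewrite !coef_scale E.
Qed.

Lemma ideal_eq a b : zg_eq a b -> R a -> R b.
Proof. move=> E [rs [s E']]; exists rs; split=> //; exact: zg_eq_trans (zg_eq_sym E) E'. Qed.

End Ideal.

Section Setoid.
Variable R : ZG2 -> Prop.
Hypotheses (R0 : R [::]) (RD : forall a b, R a -> R b -> R (a ++ b))
  (RZ : forall k a, R a -> R (zscale k a)) (Req : forall a b, zg_eq a b -> R a -> R b).

Definition eqv a b := R (a ++ zneg b).

Lemma eqv_zg a b : zg_eq a b -> eqv a b.
Proof. move=> E; apply: Req R0 => x; rewrite coef_cat coef_scale coef_nil E; ring. Qed.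
Lemma eqv_refl a : eqv a a. Proof. exact: eqv_zg. Qed.
Lemma eqv_sym a b : eqv a b -> eqv b a.
Proof. move=> H; apply: Req (RZ (-1) H); zgeq. Qed.
Lemma eqv_trans a b c : eqv a b -> eqv b c -> eqv a c.
Proof. move=> H1 H2; apply: Req (RD H1 H2); zgeq. Qed.
Lemma eqv_cat a b c d : eqv a b -> eqv c d -> eqv (a ++ c) (b ++ d).
Proof. move=> H1 H2; apply: Req (RD H1 H2); zgeq. Qed.
Lemma eqv_scale k a b : eqv a b -> eqv (zscale k a) (zscale k b).
Proof. move=> H; apply: Req (RZ k H); zgeq. Qed.
Lemma eqv_R a : eqv a [::] -> R a.
Proof. move=> H; apply: Req H; zgeq. Qed.
Lemma R_eqv a : R a -> eqv a [::].
Proof. move=> H; apply: Req H; zgeq. Qed.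
Lemma eqv_rel a b : eqv a b <-> R (a ++ zneg b). Proof. by []. Qed.

End Setoid.

Lemma coprime_det a b c d : a*d - b*c = 1 -> coprime `|a| `|c|.
Proof. move=> D; rewrite -coprimezE; apply/coprimezP; exists (d, -b) => /=; rewrite -D; ring. Qed.

Lemma ratq_num a c : coprime `|a| `|c| -> 0 < c -> numq (a%:Q / c%:Q) = a.
Proof. move=> H c0; by rewrite coprimeq_num // gtr0_sg // mul1r. Qed.
Lemma ratq_den a c : coprime `|a| `|c| -> 0 < c -> denq (a%:Q / c%:Q) = c.
Proof. move=> H c0; rewrite coprimeq_den // gt_eqF //= gtr0_norm //. Qed.

Lemma pp_ex (r : rat) : exists bd : int * int, numq r * bd.2 - bd.1 * denq r = 1 /\ 0 <= bd.2 /\ bd.2 < denq r.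
Proof.
set p := numq r; set q := denq r.
have q0 : 0 < q := denq_gt0 r.
have cop : coprimez p q by rewrite coprimezE; exact: coprime_num_den.
have [u [v Huv]] := Bezoutz p q.
have g1 : gcdz p q = 1 by apply/eqP.
rewrite g1 in Huv.
exists (- v - p * (u %/ q)%Z, (u %% q)%Z) => /=.
split; last split.
- have E := divz_eq u q; set m := (u %% q)%Z in E *; set dd := (u %/ q)%Z in E *.
  rewrite -Huv E; ring.
- apply: modz_ge0; lia.
- exact: ltz_pmod.
Qed.

Definition pp (r : rat) : int * int := proj1_sig (constructive_indefinite_description _ (pp_ex r)).
Lemma ppP r : numq r * (pp r).2 - (pp r).1 * denq r = 1 /\ 0 <= (pp r).2 /\ (pp r).2 < denq r.
Proof. rewrite /pp; exact: proj2_sig (constructive_indefinite_description _ (pp_ex r)). Qed.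

Definition gmat (r : rat) : mat := (numq r, (pp r).1, denq r, (pp r).2).
Definition gam (r : rat) : PSL2Z := pmat (gmat r).
Definition parent (r : rat) : P1Q := azero (gmat r).
Definition qsize (x : P1Q) : nat := if x is Some r then `|denq r|%N else 0%N.

Lemma gmat_det r : mdet (gmat r) = 1.
Proof. by have [D _] := ppP r; rewrite /= -D. Qed.

Lemma size_parent r : (qsize (parent r) < qsize (Some r))%N.
Proof.
have [D [d0 dq]] := ppP r.
rewrite /parent /gmat /=.
case: ifPn => [_ | dn0] /=.
  have := denq_gt0 r; lia.
have cop : coprime `|(pp r).1| `|(pp r).2|.
  rewrite -coprimezE; apply/coprimezP; exists (- denq r, numq r) => /=; rewrite -D; ring.
rewrite ratq_den //; last by rewrite lt_neqAle eq_sym dn0 d0.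
lia.
Qed.

Lemma act_inf_gam r : act_inf (gam r) = Some r.
Proof.
rewrite /gam act_inf_pmat ?gmat_det //= gt_eqF ?denq_gt0 //; by rewrite divq_num_den.
Qed.
Lemma act_zero_gam r : act_zero (gam r) = parent r.
Proof. by rewrite /gam act_zero_pmat ?gmat_det. Qed.

Lemma gmat_int (n : int) : gmat (n%:Q) = (n, -1, 1, 0).
Proof.
have [D [d0 dq]] := ppP (n%:Q).
rewrite /gmat numq_int denq_int in D dq *.
have e2 : (pp n%:Q).2 = 0 by lia.
rewrite e2 in D *; congr (_,_,_,_); lia.
Qed.

Section Key.
Variable R : ZG2 -> Prop.
Hypotheses (R0 : R [::]) (RD : forall a b, R a -> R b -> R (a ++ b))
  (RZ : forall k a, R a -> R (zscale k a)) (Req : forall a b, zg_eq a b -> R a -> R b).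
Variable E : PSL2Z -> ZG2.
Hypothesis HS : forall g, R (E g ++ E (pmul g Smat)).
Hypothesis HU : forall g, R (E g ++ E (pmul g Umat) ++ E (pmul g U2)).

Fixpoint psiN (n : nat) (x : P1Q) : ZG2 :=
  match n with
  | 0%N => [::]
  | n'.+1 => match x with None => [::] | Some r => psiN n' (parent r) ++ E (gam r) end
  end.
Definition psi x := psiN (qsize x).+1 x.

Lemma psiN_stable n m x : (qsize x < n)%N -> (qsize x < m)%N -> psiN n x = psiN m x.
Proof.
elim: n m x => [|n IH] [|m] x //= h1 h2.
case: x h1 h2 => // r /= h1 h2; congr (_ ++ _); apply: IH; move: (size_parent r) => /=; lia.
Qed.

Lemma psi_none : psi None = [::]. Proof. by []. Qed.
Lemma psi_some r : psi (Some r) = psi (parent r) ++ E (gam r).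
Proof.
rewrite {1}/psi; rewrite [psiN _ (Some r)]/=; congr (_ ++ _); rewrite /psi; apply: psiN_stable => //; move: (size_parent r) => /=; lia.
Qed.
Lemma psi_int (n : int) : psi (Some n%:Q) = E (pmat (n, -1, 1, 0)).
Proof. by rewrite psi_some /parent /gam gmat_int /=. Qed.

Definition P g := R (E g ++ zneg (psi (act_inf g) ++ zneg (psi (act_zero g)))).

Lemma P_S g : P (pmul g Smat) -> P g.
Proof.
rewrite /P; have [-> ->] := act_S g => H.
apply: Req (RD (HS g) (RZ (-1) H)); zgeq.
Qed.


Ltac dt := rewrite /=; first [ring | match goal with D : _ = 1 |- _ => apply: (etrans _ D); ring end].

Lemma divq1 (a : int) : a%:Q / 1%:Q = a%:Q.
Proof. by rewrite divr1. Qed.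

Lemma T_rel b : R (E (pmat (b,-1,1,0)) ++ E (pmat (1,b,0,1))).
Proof.
have e : pmul (pmat (b,-1,1,0)) Smat = pmat (1,b,0,1).
  rewrite Smat_def pmulE; [|dt|dt]. rewrite mmulS -[RHS]pmat_neg /=; f_equal; congr (_,_,_,_); ring.
by rewrite -e.
Qed.

Lemma P_T b : P (pmat (1, b, 0, 1)).
Proof.
rewrite /P act_inf_pmat ?act_zero_pmat; try dt.
rewrite /= divq1 psi_int.
apply: Req (T_rel b); zgeq.
Qed.

Lemma P_gint a : P (pmat (a, -1, 1, 0)).
Proof.
rewrite /P act_inf_pmat ?act_zero_pmat; try dt.
rewrite /= divq1 psi_int.
apply: Req R0; zgeq.
Qed.

Lemma P_B2 a : P (pmat (a, -a-1, 1, -1)).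
Proof.
have H := HU (pmat (a+1,-1,1,0)).
have eU : pmul (pmat (a+1,-1,1,0)) Umat = pmat (1,a,0,1).
  rewrite Umat_def pmulE; [|dt|dt]. rewrite mmulU; f_equal; congr (_,_,_,_); ring.
have eU2 : pmul (pmat (a+1,-1,1,0)) U2 = pmat (a,-a-1,1,-1).
  rewrite U2_def pmulE; [|dt|dt]. rewrite mmulU2 -[RHS]pmat_neg; f_equal; congr (_,_,_,_); ring.
rewrite eU eU2 in H.
rewrite /P act_inf_pmat ?act_zero_pmat; try dt.
rewrite /= divq1 psi_int.
have -> : ((-a-1)%:Q / (-1)%:Q) = (a+1)%:Q.
  have e1 : (-a-1 : int) = - (a+1) by ring.
  by rewrite e1 !rmorphN /= invrN mulrNN divq1.
rewrite psi_int.
apply: Req (RD H (RZ (-1) (T_rel a))); zgeq.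
Qed.

Lemma P_B3 a : P (pmat (a, a-1, 1, 1)).
Proof.
apply: P_S.
have -> : pmul (pmat (a, a-1, 1, 1)) Smat = pmat (a-1, -(a-1)-1, 1, -1).
  rewrite Smat_def pmulE; [|dt|dt]. rewrite mmulS; f_equal; congr (_,_,_,_); ring.
exact: P_B2.
Qed.

Lemma P_main a b c d : a*d - b*c = 1 -> 0 < c -> (`|d| < `|c|)%N -> d != 0 ->
  (forall a' b' c' d', a'*d' - b'*c' = 1 -> (`|c'| < `|c|)%N -> (`|d'| < `|c|)%N ->
     P (pmat (a',b',c',d'))) -> P (pmat (a,b,c,d)).
Proof.
move=> D c0 dc dn0 IH.
set r := a%:Q / c%:Q.
have cop := coprime_det D.
have nr : numq r = a := ratq_num cop c0.
have dr : denq r = c := ratq_den cop c0.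
have [D' [d'0 d'c]] := ppP r.
have eg : gam r = pmat (a, (pp r).1, c, (pp r).2) by rewrite /gam /gmat nr dr.
have epar : parent r = azero (a, (pp r).1, c, (pp r).2) by rewrite /parent /gmat nr dr.
rewrite nr dr in D' d'c.
move: (pp r) D' d'0 d'c eg epar => [b' d'] /= D' d'0 d'c eg epar.
set k := d' * b - b' * d.
have ed : d = d' + k * c.
  have : d' + k * c = d * (a*d' - b'*c) + d' * (1 - (a*d - b*c)) by rewrite /k; ring.
  rewrite D D' => ->; ring.
have eb : b = b' + k * a.
  have : b' + k * a = b * (a*d' - b'*c) + b' * (1 - (a*d - b*c)) by rewrite /k; ring.
  rewrite D D' => ->; ring.
have ainfr : act_inf (pmat (a,b,c,d)) = Some r by rewrite act_inf_pmat //= gt_eqF.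
have [k0|k1] : k = 0 \/ k = -1 by nia.
  have eb0 : b = b' by rewrite eb k0; ring.
  have ed0 : d = d' by rewrite ed k0; ring.
  clear eb ed; subst b d.
  rewrite -eg /P act_inf_gam act_zero_gam psi_some.
  apply: Req R0; zgeq.
have eb0 : b = b' + -1 * a by rewrite eb k1.
have ed0 : d = d' + -1 * c by rewrite ed k1.
clear eb ed; subst b d.
have d'pos : 0 < d' by lia.
set h := pmat (a, b' + -1 * a, c, d' + -1 * c).
rewrite -/h in ainfr.
have Dh : mdet (a, b' + -1 * a, c, d' + -1 * c) = 1 by dt.
have eU : pmul h Umat = pmat (a - b', b', c - d', d').
  rewrite /h Umat_def pmulE //; f_equal; rewrite mmulU; congr (_,_,_,_); ring.
have eU2 : pmul h U2 = pmul (gam r) Smat.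
  rewrite /h eg U2_def Smat_def !pmulE // mmulU2 mmulS -[RHS]pmat_neg.
  f_equal; congr (_,_,_,_); ring.
have HUh := HU h. rewrite eU2 in HUh.
have HSg := HS (gam r).
have PhU : P (pmul h Umat).
  rewrite eU; apply: IH; first dt; lia.
move: PhU; rewrite /P.
have [-> ->] := act_U h.
have -> : act_one h = parent r.
  rewrite /h act_one_pmat // epar /=.
  have -> : c + (d' + -1 * c) = d' by ring.
  have -> : a + (b' + -1 * a) = b' by ring.
  by rewrite gt_eqF.
rewrite ainfr psi_some => PhU.
apply: Req (RD (RD HUh (RZ (-1) PhU)) (RZ (-1) HSg)); zgeq.
Qed.

Lemma P_norm n : (forall a b c d, a*d - b*c = 1 -> (`|c| < n)%N -> (`|d| < n)%N -> P (pmat (a,b,c,d))) ->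
 forall a b c d, a*d - b*c = 1 -> (`|c| <= n)%N -> (`|d| <= n)%N -> (0 < c \/ (c = 0 /\ 0 < d)) ->
 P (pmat (a,b,c,d)).
Proof.
move=> IH a b c d D hc hd [c0|[c0 d0]]; last first.
  subst c; have : a * d = 1 by apply: etrans _ D; ring.
  case/mul_eq1 => [[-> ->]|[_ d1]]; [exact: P_T | lia].
have [d0|dn0] := eqVneq d 0.
  subst d. have : (-b) * c = 1 by apply: etrans _ D; ring.
  case/mul_eq1 => [[b1 c1]|[_ c1]]; last lia.
  have -> : b = -1 by lia. subst c. exact: P_gint.
case: (ltngtP `|c| `|d|) => cd.
- apply: P_S.
  have eS : pmul (pmat (a,b,c,d)) Smat = pmat (b,-a,d,-c).
    rewrite Smat_def pmulE // mmulS //.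
  rewrite eS.
  have [dpos|dneg] := ltP 0 d.
    apply: P_main => //; first dt.
    + by rewrite abszN.
    + by rewrite oppr_eq0 gt_eqF.
    + move=> a' b' c' d' D' h1 h2; apply: IH => //; lia.
  have -> : pmat (b,-a,d,-c) = pmat (-b,a,-d,c).
    rewrite -[RHS]pmat_neg /=; f_equal; congr (_,_,_,_); ring.
  apply: P_main => //; first dt.
  + lia.
  + by rewrite abszN.
  + by rewrite gt_eqF.
  + move=> a' b' c' d' D' h1 h2; apply: IH => //; move: h1 h2; rewrite abszN; lia.
- apply: P_main => //; move=> a' b' c' d' D' h1 h2; apply: IH => //; lia.
- have [dp|dm] : d = c \/ d = -c by lia.
    subst d. have : (a - b) * c = 1 by apply: etrans _ D; ring.
    case/mul_eq1 => [[ab c1]|[_ c1]]; last lia. subst c.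
    have -> : b = a - 1 by lia. exact: P_B3.
  subst d. have : (- a - b) * c = 1 by apply: etrans _ D; ring.
  case/mul_eq1 => [[ab c1]|[_ c1]]; last lia. subst c.
  have -> : b = - a - 1 by lia. have -> : (-1 : int) = - 1 by []. exact: P_B2.
Qed.

Lemma P_all n : forall a b c d, a*d - b*c = 1 -> (`|c| < n)%N -> (`|d| < n)%N -> P (pmat (a,b,c,d)).
Proof.
elim: n => [|n IH] a b c d D hc hd; first lia.
have [N|N] : (0 < c \/ (c = 0 /\ 0 < d)) \/ (0 < -c \/ (-c = 0 /\ 0 < -d)).
  have [c0|c0] := eqVneq c 0; last lia.
  subst c. have [d0|d0] := eqVneq d 0; last lia.
  subst d. move: D; lia.
  apply: (P_norm IH) => //; lia.
rewrite -pmat_neg /=; apply: (P_norm IH) => //; first dt; rewrite abszN; lia.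
Qed.

Theorem key_lemma g : P g.
Proof.
psplit g a b c d Eg D.
apply: (P_all (n := (maxn `|c| `|d|).+1)) => //; lia.
Qed.

End Key.

Lemma sum_zg_mul (h : G2 -> int) r g :
  \sum_(e <- zg_mul r g) e.1 * h e.2 =
  \sum_(e <- r) e.1 * \sum_(f <- g) f.1 * h (pmul e.2.1 f.2.1, pmul e.2.2 f.2.2).
Proof.
elim: r => [|e r IH]; first by rewrite !big_nil.
rewrite /zg_mul /= -/(zg_mul r g) big_cat IH big_cons big_map; congr (_ + _).
rewrite big_distrr /=; apply: eq_bigr => f _; ring.
Qed.

Lemma sum_icomb (h : G2 -> int) rs gs :
  (forall g, g \in gs -> forall y : G2, \sum_(f <- g) f.1 * h (pmul y.1 f.2.1, pmul y.2 f.2.2) = 0) ->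
  \sum_(e <- icomb rs gs) e.1 * h e.2 = 0.
Proof.
rewrite /icomb; elim: gs rs => [|g gs IH] [|r rs] Hg //=; rewrite ?big_nil //.
rewrite big_cat IH; last by move=> g' g'in; apply: Hg; rewrite inE g'in orbT.
rewrite Monoid.mulm1 sum_zg_mul big1_seq // => e _.
by rewrite (Hg g (mem_head _ _)) mulr0.
Qed.

Lemma ideal_sum gs (h : G2 -> int) l :
  (forall g, g \in gs -> forall y : G2, \sum_(f <- g) f.1 * h (pmul y.1 f.2.1, pmul y.2 f.2.2) = 0) ->
  in_left_ideal gs l -> \sum_(e <- l) e.1 * h e.2 = 0.
Proof.
move=> Hg [rs [s E]]; rewrite (sum_zg_eq h E); exact: (sum_icomb rs Hg).
Qed.

Lemma bdry_S g x : bdry g x + bdry (pmul g Smat) x = 0.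
Proof. rewrite /bdry; have [-> ->] := act_S g; ring. Qed.
Lemma bdry_U g x : bdry g x + bdry (pmul g Umat) x + bdry (pmul g U2) x = 0.
Proof. rewrite /bdry; have [-> ->] := act_U g; have [-> ->] := act_U2 g; ring. Qed.

Lemma sum_mkcond (P : G2 -> bool) (F : G2 -> int) (l : ZG2) :
  \sum_(e <- l | P e.2) e.1 * F e.2 = \sum_(e <- l) e.1 * (if P e.2 then F e.2 else 0).
Proof. rewrite big_mkcond; apply: eq_bigr => e _; case: ifP => _ //; by rewrite mulr0. Qed.

Lemma dir1_H l : in_left_ideal genH l -> in_IH l.
Proof.
move=> Hl C x; rewrite (sum_mkcond (fun y => inGinf (pmul (pinv C) y.2)) (fun y => bdry y.1 x)).
apply: (@ideal_sum genH (fun y => if inGinf (pmul (pinv C) y.2) then bdry y.1 x else 0) l _ Hl) => g.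
rewrite !inE => /or3P [] /eqP -> [y1 y2]; rewrite !big_cons big_nil /= ?pmulg1.
- case: ifP => _; last ring. have := bdry_S y1 x; lia.
- case: ifP => _; last ring. have := bdry_U y1 x; lia.
- rewrite !inGinf_coset act_T; case: ifP => _; ring.
Qed.

Lemma dir1_V l : in_left_ideal genV l -> in_IV l.
Proof.
move=> Hl C x; rewrite (sum_mkcond (fun y => inG0 (pmul (pinv C) y.1)) (fun y => bdry y.2 x)).
apply: (@ideal_sum genV (fun y => if inG0 (pmul (pinv C) y.1) then bdry y.2 x else 0) l _ Hl) => g.
rewrite !inE => /or3P [] /eqP -> [y1 y2]; rewrite !big_cons big_nil /= ?pmulg1.
- case: ifP => _; last ring. have := bdry_S y2 x; lia.
- case: ifP => _; last ring. have := bdry_U y2 x; lia.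
- rewrite !inG0_coset act_US; case: ifP => _; ring.
Qed.

Lemma dir1_D l : in_left_ideal genD l -> in_ID l.
Proof.
move=> Hl g0 x; rewrite (sum_mkcond (fun y => pmul y.2 (pinv y.1) == g0) (fun y => bdry y.1 x)).
apply: (@ideal_sum genD (fun y => if pmul y.2 (pinv y.1) == g0 then bdry y.1 x else 0) l _ Hl) => g.
rewrite !inE => /orP [] /eqP -> [y1 y2]; rewrite !big_cons big_nil /= ?pmulg1.
- rewrite pmul_coset; case: ifP => _; last ring. have := bdry_S y1 x; lia.
- rewrite !pmul_coset; case: ifP => _; last ring.
  have := bdry_U y1 x; lia.
Qed.

Lemma pick_sum (T : eqType) (s : seq T) (q : T) (f : T -> int) :
  uniq s -> q \in s -> \sum_(p <- s) (if p == q then f p else 0) = f q.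
Proof.
move=> us qs; rewrite (bigD1_seq q) //= eqxx big1 ?addr0 // => p /negbTE ->; by [].
Qed.

Lemma regroup (K : eqType) (sel : G2 -> PSL2Z) (key : G2 -> K) (F : P1Q -> K -> ZG2) (l : ZG2) :
  (forall k x, \sum_(e <- l | key e.2 == k) e.1 * bdry (sel e.2) x = 0) ->
  zg_eq (flatten [seq zscale e.1 (F (act_inf (sel e.2)) (key e.2) ++ zneg (F (act_zero (sel e.2)) (key e.2))) | e <- l]) [::].
Proof.
move=> H z; rewrite coef_flatten coef_nil big_map.
set Pp := undup ([seq (act_inf (sel e.2), key e.2) | e <- l] ++ [seq (act_zero (sel e.2), key e.2) | e <- l]).
have uP : uniq Pp by exact: undup_uniq.
set cF := fun p : P1Q * K => coef (F p.1 p.2) z.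
have step : forall e, e \in l -> coef (zscale e.1 (F (act_inf (sel e.2)) (key e.2) ++ zneg (F (act_zero (sel e.2)) (key e.2)))) z
   = \sum_(p <- Pp) e.1 * ((if key e.2 == p.2 then bdry (sel e.2) p.1 else 0) * cF p).
  move=> e el.
  have i1 : (act_inf (sel e.2), key e.2) \in Pp by rewrite mem_undup mem_cat map_f.
  have i2 : (act_zero (sel e.2), key e.2) \in Pp by rewrite mem_undup mem_cat map_f ?orbT.
  rewrite coef_scale coef_cat coef_scale -big_distrr /=; congr (_ * _).
  have h1 := pick_sum cF uP i1. have h2 := pick_sum cF uP i2.
  rewrite /cF /= in h1 h2. rewrite -h1 -h2 mulN1r -sumrN -big_split /=.
  apply: eq_bigr => [[x k]] _ /=; rewrite /bdry /cF /= !xpair_eqE.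
  rewrite [k == _]eq_sym [x == act_inf _]eq_sym [x == act_zero _]eq_sym.
  case: (key e.2 == k); case: (act_inf (sel e.2) == x); case: (act_zero (sel e.2) == x); rewrite /=; ring.
rewrite (eq_big_seq _ step) exchange_big /= big1 // => [[x k]] _.
have := H k x; rewrite big_mkcond /= => Hk.
transitivity (cF (x,k) * \sum_(e <- l) (if key e.2 == k then e.1 * bdry (sel e.2) x else 0)); last by rewrite Hk mulr0.
rewrite big_distrr /=; apply: eq_bigr => e _.
case: ifP => _; rewrite /cF /=; ring.
Qed.

Definition rep_inf (y : P1Q) : PSL2Z :=
  match excluded_middle_informative (exists g, act_inf g = y) with
  | left Hx => proj1_sig (constructive_indefinite_description _ Hx) | right _ => pone end.
Lemma rep_infP g : act_inf (rep_inf (act_inf g)) = act_inf g.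
Proof.
rewrite /rep_inf; case: excluded_middle_informative => [Hx|Hx]; last by case: Hx; exists g.
exact: proj2_sig (constructive_indefinite_description _ Hx).
Qed.
Definition rep_zero (y : P1Q) : PSL2Z :=
  match excluded_middle_informative (exists g, act_zero g = y) with
  | left Hx => proj1_sig (constructive_indefinite_description _ Hx) | right _ => pone end.
Lemma rep_zeroP g : act_zero (rep_zero (act_zero g)) = act_zero g.
Proof.
rewrite /rep_zero; case: excluded_middle_informative => [Hx|Hx]; last by case: Hx; exists g.
exact: proj2_sig (constructive_indefinite_description _ Hx).
Qed.

Lemma coset_inf C b : act_inf b = act_inf C -> exists n, b = pmul C (pmat (1,n,0,1)).
Proof.
move=> H; have : inGinf (pmul (pinv C) b) by rewrite inGinf_coset H.
move/propbE => [n En]; exists n; rewrite -pexpzT -En pmulA pmulgV pmul1g //.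
Qed.
Lemma coset_zero C a : act_zero a = act_zero C -> exists n, a = pmul C (pmat (1,0,n,1)).
Proof.
move=> H; have : inG0 (pmul (pinv C) a) by rewrite inG0_coset H.
move/propbE => [n En]; exists n; rewrite -pexpzUS -En pmulA pmulgV pmul1g //.
Qed.

Lemma genH1 a b : in_left_ideal genH [:: (1,(a,b)); (1,(pmul a Smat, b))].
Proof. exists [:: [:: (1,(a,b))]; [::]; [::]]; split => // x. by rewrite /= !pmulg1. Qed.
Lemma genH2 a b : in_left_ideal genH [:: (1,(a,b)); (1,(pmul a Umat, b)); (1,(pmul a U2, b))].
Proof. exists [:: [::]; [:: (1,(a,b))]; [::]]; split => // x. by rewrite /= !pmulg1. Qed.
Lemma genH3 a b : in_left_ideal genH [:: (1,(a,b)); (-1,(a, pmul b Tmat))].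
Proof. exists [:: [::]; [::]; [:: (1,(a,b))]]; split => // x. by rewrite /= !pmulg1 mulr1. Qed.

Ltac dt := rewrite /=; first [ring | match goal with D : _ = 1 |- _ => apply: (etrans _ D); ring end].

Ltac ic := first [exact: ideal0 | exact: idealD | exact: idealZ | exact: ideal_eq].

Section IS.
Variable gs : seq ZG2.
Local Notation RR := (in_left_ideal gs).
Lemma ie_zg a b : zg_eq a b -> eqv RR a b. Proof. apply: eqv_zg; ic. Qed.
Lemma ie_refl a : eqv RR a a. Proof. apply: eqv_refl; ic. Qed.
Lemma ie_sym a b : eqv RR a b -> eqv RR b a. Proof. apply: eqv_sym; ic. Qed.
Lemma ie_trans a b c : eqv RR a b -> eqv RR b c -> eqv RR a c. Proof. apply: eqv_trans; ic. Qed.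
Lemma ie_cat a b c d : eqv RR a b -> eqv RR c d -> eqv RR (a ++ c) (b ++ d). Proof. apply: eqv_cat; ic. Qed.
Lemma ie_scale k a b : eqv RR a b -> eqv RR (zscale k a) (zscale k b). Proof. apply: eqv_scale; ic. Qed.
Lemma ie_R a : eqv RR a [::] -> RR a. Proof. apply: eqv_R; ic. Qed.
Lemma ie_key E : (forall g, RR (E g ++ E (pmul g Smat))) ->
  (forall g, RR (E g ++ E (pmul g Umat) ++ E (pmul g U2))) ->
  forall g, eqv RR (E g) (psi E (act_inf g) ++ zneg (psi E (act_zero g))).
Proof. move=> HS HU g; apply: (key_lemma _ _ _ _ HS HU g); ic. Qed.

Lemma assemble (K : eqType) (sel : G2 -> PSL2Z) (key : G2 -> K) (F : P1Q -> K -> ZG2) (l : ZG2) :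
  (forall k x, \sum_(e <- l | key e.2 == k) e.1 * bdry (sel e.2) x = 0) ->
  (forall y : G2, eqv RR [:: (1, y)] (F (act_inf (sel y)) (key y) ++ zneg (F (act_zero (sel y)) (key y)))) ->
  RR l.
Proof.
move=> Hs Hy; apply: ie_R.
apply: ie_trans (ie_zg (regroup F Hs)).
elim: l {Hs} => [|[k y] l IH] /=; first exact: ie_refl.
have -> : (k, y) :: l = [:: (k,y)] ++ l by [].
apply: ie_cat IH.
apply: ie_trans (ie_scale k (Hy y)).
apply: ie_zg => x; rewrite ?(coef_cat, coef_scale, coef_nil, coef_cons) /=; case: ifP => _; ring.
Qed.
End IS.

Lemma TnT n : pmul (pmat (1,n,0,1)) Tmat = pmat (1,n+1,0,1).
Proof. rewrite Tmat_def pmulE; [|dt|dt]. f_equal; rewrite /=; congr (_,_,_,_); ring. Qed.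

Lemma tstep a h : eqv (in_left_ideal genH) [:: (1,(a,h))] [:: (1,(a, pmul h Tmat))].
Proof. apply: ideal_eq (genH3 a h); zgeq. Qed.

Lemma tmove_pos a g (k : nat) : eqv (in_left_ideal genH) [:: (1,(a, pmul g (pmat (1,k%:Z,0,1))))] [:: (1,(a,g))].
Proof.
elim: k => [|k IH]; first by rewrite -pone_pmat pmulg1; exact: ie_refl.
apply: ie_trans IH; apply: ie_sym.
have -> : pmul g (pmat (1,k.+1%:Z,0,1)) = pmul (pmul g (pmat (1,k%:Z,0,1))) Tmat.
  by rewrite -pmulA TnT intS addrC.
exact: tstep.
Qed.

Lemma tmove_neg a g (k : nat) : eqv (in_left_ideal genH) [:: (1,(a, pmul g (pmat (1,- k%:Z,0,1))))] [:: (1,(a,g))].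
Proof.
elim: k => [|k IH]; first by rewrite oppr0 -pone_pmat pmulg1; exact: ie_refl.
apply: ie_trans IH.
have -> : pmul g (pmat (1,- k%:Z,0,1)) = pmul (pmul g (pmat (1,- k.+1%:Z,0,1))) Tmat.
  by rewrite -pmulA TnT intS; do 2 f_equal; congr (_,_,_,_); ring.
exact: tstep.
Qed.

Lemma tmove a g n : eqv (in_left_ideal genH) [:: (1,(a, pmul g (pmat (1,n,0,1))))] [:: (1,(a,g))].
Proof. case: n => k; first exact: tmove_pos. rewrite NegzE; exact: tmove_neg. Qed.

Definition EH (y : P1Q) (g : PSL2Z) : ZG2 := [:: (1, (g, rep_inf y))].

Lemma dir2_H l : in_IH l -> in_left_ideal genH l.
Proof.
move=> Hl.
apply: (assemble (sel := fst) (key := fun y => act_inf y.2) (F := fun x y => psi (EH y) x)).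
  move=> k x.
  case: (excluded_middle_informative (exists C, act_inf C = k)) => [[C HC]|nC].
    transitivity (\sum_(e <- l | inGinf (pmul (pinv C) e.2.2)) e.1 * bdry e.2.1 x); last exact: Hl.
    apply: eq_bigl => e /=; by rewrite inGinf_coset HC.
  rewrite big_seq_cond big1 // => e /andP [_ /eqP He]; case: nC; by exists e.2.2.
move=> [a b] /=.
have [n En] := coset_inf (esym (rep_infP b)).
apply: ie_trans (ie_key _ _ a).
- rewrite {1}En /EH; exact: tmove.
- move=> g; exact: genH1.
- move=> g; exact: genH2.
Qed.

Lemma genV1 a b : in_left_ideal genV [:: (1,(a,b)); (1,(a, pmul b Smat))].
Proof. exists [:: [:: (1,(a,b))]; [::]; [::]]; split => // x. by rewrite /= !pmulg1. Qed.
Lemma genV2 a b : in_left_ideal genV [:: (1,(a,b)); (1,(a, pmul b Umat)); (1,(a, pmul b U2))].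
Proof. exists [:: [::]; [:: (1,(a,b))]; [::]]; split => // x. by rewrite /= !pmulg1. Qed.
Lemma genV3 a b : in_left_ideal genV [:: (1,(a,b)); (-1,(pmul a USmat, b))].
Proof. exists [:: [::]; [::]; [:: (1,(a,b))]]; split => // x. by rewrite /= !pmulg1 mulr1. Qed.

Lemma USnUS n : pmul (pmat (1,0,n,1)) USmat = pmat (1,0,n+1,1).
Proof. rewrite USmat_def pmulE; [|dt|dt]. f_equal; rewrite /=; congr (_,_,_,_); ring. Qed.

Lemma ustep h b : eqv (in_left_ideal genV) [:: (1,(h,b))] [:: (1,(pmul h USmat, b))].
Proof. apply: ideal_eq (genV3 h b); zgeq. Qed.

Lemma umove_pos b g (k : nat) : eqv (in_left_ideal genV) [:: (1,(pmul g (pmat (1,0,k%:Z,1)), b))] [:: (1,(g,b))].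
Proof.
elim: k => [|k IH]; first by rewrite -pone_pmat pmulg1; exact: ie_refl.
apply: ie_trans IH; apply: ie_sym.
have -> : pmul g (pmat (1,0,k.+1%:Z,1)) = pmul (pmul g (pmat (1,0,k%:Z,1))) USmat.
  by rewrite -pmulA USnUS intS addrC.
exact: ustep.
Qed.

Lemma umove_neg b g (k : nat) : eqv (in_left_ideal genV) [:: (1,(pmul g (pmat (1,0,- k%:Z,1)), b))] [:: (1,(g,b))].
Proof.
elim: k => [|k IH]; first by rewrite oppr0 -pone_pmat pmulg1; exact: ie_refl.
apply: ie_trans IH.
have -> : pmul g (pmat (1,0,- k%:Z,1)) = pmul (pmul g (pmat (1,0,- k.+1%:Z,1))) USmat.
  by rewrite -pmulA USnUS intS; do 2 f_equal; congr (_,_,_,_); ring.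
exact: ustep.
Qed.

Lemma umove b g n : eqv (in_left_ideal genV) [:: (1,(pmul g (pmat (1,0,n,1)), b))] [:: (1,(g,b))].
Proof. case: n => k; first exact: umove_pos. rewrite NegzE; exact: umove_neg. Qed.

Definition EV (y : P1Q) (g : PSL2Z) : ZG2 := [:: (1, (rep_zero y, g))].

Lemma dir2_V l : in_IV l -> in_left_ideal genV l.
Proof.
move=> Hl.
apply: (assemble (sel := snd) (key := fun y => act_zero y.1) (F := fun x y => psi (EV y) x)).
  move=> k x.
  case: (excluded_middle_informative (exists C, act_zero C = k)) => [[C HC]|nC].
    transitivity (\sum_(e <- l | inG0 (pmul (pinv C) e.2.1)) e.1 * bdry e.2.2 x); last exact: Hl.
    apply: eq_bigl => e /=; by rewrite inG0_coset HC.
  rewrite big_seq_cond big1 // => e /andP [_ /eqP He]; case: nC; by exists e.2.1.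
move=> [a b] /=.
have [n En] := coset_zero (esym (rep_zeroP a)).
apply: ie_trans (ie_key _ _ b).
- rewrite {1}En /EV; exact: umove.
- move=> g; exact: genV1.
- move=> g; exact: genV2.
Qed.

Lemma genD1 a b : in_left_ideal genD [:: (1,(a,b)); (1,(pmul a Smat, pmul b Smat))].
Proof. exists [:: [:: (1,(a,b))]; [::]]; split => // x. by rewrite /= !pmulg1. Qed.
Lemma genD2 a b : in_left_ideal genD [:: (1,(a,b)); (1,(pmul a Umat, pmul b Umat)); (1,(pmul a U2, pmul b U2))].
Proof. exists [:: [::]; [:: (1,(a,b))]]; split => // x. by rewrite /= !pmulg1. Qed.

Definition ED (k : PSL2Z) (g : PSL2Z) : ZG2 := [:: (1, (g, pmul k g))].

Lemma dir2_D l : in_ID l -> in_left_ideal genD l.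
Proof.
move=> Hl.
apply: (assemble (sel := fst) (key := fun y => pmul y.2 (pinv y.1)) (F := fun x k => psi (ED k) x)).
  move=> k x; exact: Hl.
move=> [a b] /=.
apply: ie_trans (ie_key _ _ a).
- rewrite /ED -pmulA pmulVg pmulg1; exact: ie_refl.
- move=> g; rewrite /ED /= !pmulA; exact: genD1.
- move=> g; rewrite /ED (pmulA _ g U2) (pmulA _ g Umat); exact: genD2.
Qed.

Theorem mainTheorem5 :
  (forall l : ZG2, in_IH l <-> in_left_ideal genH l) /\
  (forall l : ZG2, in_IV l <-> in_left_ideal genV l) /\
  (forall l : ZG2, in_ID l <-> in_left_ideal genD l).
Proof.
split; [|split] => l.
- split; [exact: dir2_H | exact: dir1_H].
- split; [exact: dir2_V | exact: dir1_V].
- split; [exact: dir2_D | exact: dir1_D].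
Qed.
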